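(* Let $\alpha\neq\beta$ with $\alpha\neq0$, and let $(g_n)$ be as in the context. Then, as formal power series in $T$, $$\sum_{n\ge0}g_n(\alpha)\,T^n=\frac{1+T(\alpha-\beta)-\sqrt{1-2T(\alpha+\beta)+T^2(\alpha-\beta)^2}}{2T\alpha},$$ where the square root denotes the formal power series with constant term $1$.
   Context: Fix complex numbers $\alpha\neq\beta$. Define polynomials $g_n(x)\in\mathbb{C}[x]$ recursively by $g_0(x)=1$ and, for $n\ge1$, $$(x-\alpha)(\alpha-\beta)^{n-1}g_n(x)=\alpha(x-\beta)^n g_{n-1}(\alpha)-x(\alpha-\beta)^n g_{n-1}(x).$$ (The right-hand side vanishes at $x=\alpha$, so it is divisible by $x-\alpha$ and $g_n$ is a uniquely determined polynomial.) *)

(* Defs.v *)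
From HB Require Import structures.
From mathcomp Require Import all_boot all_order all_algebra.
Set Implicit Arguments. Unset Strict Implicit. Unset Printing Implicit Defensive.
Import Order.TTheory GRing.Theory Num.Theory.
Local Open Scope ring_scope.

(* Formal power series over a ring R in the variable T are represented by
   their coefficient sequences  nat -> R  (coefficient of T^n at n). *)
Definition fps (R : Type) := nat -> R.

Definition fps_mul (R : nzRingType) (f g : fps R) : fps R :=
  fun n => \sum_(i < n.+1) f i * g (n - i)%N.

Definition fps_of_poly (R : nzRingType) (p : {poly R}) : fps R :=
  fun n => p`_n.

(* Main.v *)
Require Import Defs.
From HB Require Import structures.
From mathcomp Require Import all_boot all_order all_algebra.
From mathcomp Require Import ring zify.
Import Order.TTheory Num.Theory.
Import GRing.Theory.
Set Implicit Arguments. Unset Strict Implicit.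
Local Open Scope ring_scope.

Lemma dvdX_root (C : fieldType) (p : {poly C}) : ('X %| p) = (p.[0] == 0).
Proof. by have := dvdp_XsubCl p 0; rewrite subr0 => ->. Qed.

Lemma dvdX_cancel (C : fieldType) (M : nat) (p : {poly C}) :
  'X^(M.+1) %| 'X * p -> 'X^M %| p.
Proof. by rewrite exprS dvdp_mul2l // polyX_eq0. Qed.

Lemma dvd_unit (C : fieldType) (k : nat) (q p : {poly C}) :
  q.[0] != 0 -> 'X^k %| q * p -> 'X^k %| p.
Proof.
move=> q0; rewrite Gauss_dvdpr //; apply: coprimep_expl.
by rewrite coprimep_sym coprimepX /root.
Qed.

Lemma comp_inj (C : fieldType) (k : nat) (w w' p : {poly C}) :
  w = 'X * w' -> w'.[0] != 0 -> 'X^k %| p \Po w -> 'X^k %| p.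
Proof.
move=> hw hw'; elim: k p => [|k IH] p; first by rewrite expr0 !dvd1p.
move=> H.
have Hk : 'X^k %| p.
  apply: IH; exact: dvdp_trans (dvdp_exp2l _ (leqnSn k)) H.
have hp : p = (p %/ 'X^k) * 'X^k by rewrite divpK.
set q := p %/ 'X^k in hp.
move: H; rewrite hp comp_polyM rmorphXn /= comp_polyX hw exprMn mulrA.
rewrite -mulrA (mulrC 'X^k) mulrA -hw.
rewrite exprS dvdp_mul2r ?expf_neq0 ?polyX_eq0 //.
rewrite dvdX_root hornerM horner_exp horner_comp hw hornerM hornerX mul0r.
rewrite mulf_eq0 expf_eq0 (negbTE hw') andbF orbF => /eqP q0.
by rewrite dvdp_mul2r ?expf_neq0 ?polyX_eq0 // dvdX_root q0.
Qed.
Definition Wp (C : fieldType) (d : C) (N : nat) : {poly C} :=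
  \sum_(i < N) ((-d) ^+ i)%:P * 'X^i.

Lemma ZW (C : fieldType) (d : C) N :
  (1 + d%:P * 'X) * Wp d N = 1 - ((-d) ^+ N)%:P * 'X^N.
Proof.
rewrite /Wp; elim: N => [|N IH].
  by rewrite big_ord0 mulr0 expr0 polyC1 mul1r subrr.
rewrite big_ord_recr /= mulrDr IH !exprS polyCM polyCN.
ring.
Qed.

Definition xp (C : fieldType) (a b : C) N := a%:P * Wp (a - b) N.
Definition wp (C : fieldType) (a b : C) N :=
  (xp a b N - b%:P) * 'X * ((a - b)^-1)%:P.
Definition Sp (C : fieldType) (a b : C) (g : nat -> {poly C}) N :=
  \sum_(k < N) ((g k).[a])%:P * (wp a b N) ^+ k.

Lemma tele (C : fieldType) (a : nat -> {poly C}) N :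
  \sum_(k < N) (a k.+1 - a k) = a N - a 0%N.
Proof.
elim: N => [|N IH]; first by rewrite big_ord0 subrr.
by rewrite big_ord_recr /= IH; ring.
Qed.

Lemma part1 (C : fieldType) (alpha beta : C) (g : nat -> {poly C}) (N : nat) :
  alpha - beta != 0 ->
  g 0%N = 1 ->
  (forall n : nat, (0 < n)%N ->
     ('X - alpha%:P) * ((alpha - beta) ^+ n.-1)%:P * g n
     = alpha%:P * ('X - beta%:P) ^+ n * ((g n.-1).[alpha])%:P
       - 'X * ((alpha - beta) ^+ n)%:P * g n.-1) ->
  'X^N %| (alpha * (alpha - beta))%:P * 'X *
           ((1 - beta%:P * 'X) * Sp alpha beta g N - 1).
Proof.
move=> hd g0 rec.
set d := alpha - beta.
set D := d%:P.
set W := Wp d N.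
set x := xp alpha beta N.
set w := wp alpha beta N.
set c := fun k => (g k).[alpha].
set G := fun k => g k \Po x.
set a := fun k => 'X^k * G k.
set eps := x - alpha%:P + x * D * 'X.
have hD : D != 0 by rewrite polyC_eq0.
have hw1 : w * D = (x - beta%:P) * 'X.
  by rewrite /w /wp -mulrA -polyCM mulVf // polyC1 mulr1.
have hwD : forall n, w ^+ n * D ^+ n = ((x - beta%:P) * 'X) ^+ n.
  by move=> n; rewrite -exprMn hw1.
have T : forall m, (x - alpha%:P) * (a m.+1 - a m)
     = (alpha%:P * D) * (w ^+ m.+1 * (c m)%:P) - eps * a m.
  move=> m.
  have hx := congr1 (fun p => p \Po x) (rec m.+1 isT).
  rewrite /= !rmorphB /= !rmorphM /= !rmorphXn /= rmorphB /= !comp_polyC comp_polyX in hx.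
  have hb : ('X - beta%:P) \Po x = x - beta%:P by rewrite comp_polyB comp_polyX comp_polyC.
  rewrite hb in hx.
  rewrite -/d -/D -/(G m) -/(G m.+1) -/(c m) in hx.
  apply: (mulIf (expf_neq0 m hD)).
  have -> : (x - alpha%:P) * (a m.+1 - a m) * D ^+ m
      = 'X^(m.+1) * ((x - alpha%:P) * D ^+ m * G m.+1)
        - (x - alpha%:P) * D ^+ m * 'X^m * G m.
    by rewrite /a; ring.
  rewrite hx /eps.
  have E : alpha%:P * D * (w ^+ m.+1 * (c m)%:P) * D ^+ m
      = alpha%:P * (c m)%:P * (w ^+ m.+1 * D ^+ m.+1).
    by rewrite [D ^+ m.+1]exprS; ring.
  rewrite [RHS]mulrBl E hwD exprMn /eps /a !exprS; ring.
set S := Sp alpha beta g N.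
set Z := 1 + D * 'X.
set k := ((-d) ^+ N)%:P.
have a0 : a 0%N = 1 by rewrite /a /G g0 expr0 mul1r comp_polyC.
have Sum : (x - alpha%:P) * (a N - 1)
    = alpha%:P * D * (w * S) - eps * \sum_(i < N) a i.
  have <- : \sum_(i < N) (x - alpha%:P) * (a i.+1 - a i) = (x - alpha%:P) * (a N - 1)
    by rewrite -mulr_sumr tele a0.
  under eq_bigr => i _ do rewrite T.
  rewrite sumrB -mulr_sumr -[\sum_(i < N) eps * a i]mulr_sumr.
  congr (_ - _); rewrite /S /Sp -/w !mulr_sumr; apply: eq_bigr => i _.
  rewrite exprS; ring.
have heps : eps = - (alpha%:P * k) * 'X^N.
  have -> : eps = alpha%:P * (Z * W - 1) by rewrite /eps /x /xp -/W /Z; ring.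
  by rewrite /Z /W /D ZW -/k; ring.
set R := eps * \sum_(i < N) a i + (x - alpha%:P) * a N.
have hR : R = alpha%:P * D * (w * S) + (x - alpha%:P).
  apply/eqP; rewrite -subr_eq0.
  have -> : R - (alpha%:P * D * (w * S) + (x - alpha%:P))
     = ((x - alpha%:P) * (a N - 1) - (alpha%:P * D * (w * S) - eps * \sum_(i < N) a i))
    by rewrite /R; ring.
  by rewrite Sum subrr.
have key : (alpha * d)%:P * 'X * ((1 - beta%:P * 'X) * S - 1)
    = Z * R + 'X^N * (alpha%:P ^+ 2 * k * 'X * S + alpha%:P * k).
  rewrite hR.
  have -> : alpha%:P * D * (w * S) = alpha%:P * S * (w * D) by ring.
  rewrite hw1 /x /xp -/W.
  apply/eqP; rewrite -subr_eq0.
  have -> : (alpha * d)%:P * 'X * ((1 - beta%:P * 'X) * S - 1) -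
    (Z * (alpha%:P * S * ((alpha%:P * W - beta%:P) * 'X) + (alpha%:P * W - alpha%:P)) +
     'X^N * (alpha%:P ^+ 2 * k * 'X * S + alpha%:P * k))
     = - (Z * W - (1 - k * 'X^N)) * (alpha%:P ^+ 2 * 'X * S + alpha%:P).
    by rewrite /Z /D /d polyCM polyCB; ring.
  by rewrite /Z /W /D ZW -/k subrr oppr0 mul0r.
rewrite key; apply: dvdp_add; last exact: dvdp_mulIl.
apply: dvdp_mull; rewrite /R heps; apply: dvdp_add.
  by rewrite -mulrA; apply: dvdp_mull; apply: dvdp_mulIl.
by apply: dvdp_mull; rewrite /a; apply: dvdp_mulIl.
Qed.

Lemma W0 (C : fieldType) (d : C) N : (0 < N)%N -> (Wp d N).[0] = 1.
Proof.
case: N => // M _; rewrite /Wp horner_sum big_ord_recl /= !hornerE /= big1 ?addr0 // => i _.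
by rewrite !hornerE /bump /= expr0n /= mulr0.
Qed.

Lemma part2 (C : fieldType) (alpha beta : C) (g : nat -> {poly C}) (N : nat) :
  alpha - beta != 0 -> alpha != 0 ->
  g 0%N = 1 ->
  (forall n : nat, (0 < n)%N ->
     ('X - alpha%:P) * ((alpha - beta) ^+ n.-1)%:P * g n
     = alpha%:P * ('X - beta%:P) ^+ n * ((g n.-1).[alpha])%:P
       - 'X * ((alpha - beta) ^+ n)%:P * g n.-1) ->
  'X^(N.-1) %| alpha%:P * 'X * (\poly_(i < N) (g i).[alpha]) ^+ 2
             - (1 + (alpha - beta)%:P * 'X) * (\poly_(i < N) (g i).[alpha]) + 1.
Proof.
move=> hd ha g0 rec.
case: N => [|M]; first by rewrite expr0 dvd1p.
have H1 := part1 M.+1 hd g0 rec.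
rewrite /= .
set d := alpha - beta in hd H1 *.
set D := d%:P.
set W := Wp d M.+1.
set x := xp alpha beta M.+1.
set w := wp alpha beta M.+1.
set S := Sp alpha beta g M.+1 in H1.
set Cp := \poly_(i < M.+1) (g i).[alpha].
set Y := 1 - beta%:P * 'X.
set Z := 1 + D * 'X.
set k := ((-d) ^+ M.+1)%:P.
have hD : D != 0 by rewrite polyC_eq0.
have hw1 : w * D = (x - beta%:P) * 'X.
  by rewrite /w /wp -mulrA -polyCM mulVf // polyC1 mulr1.
have He : 'X^M %| Y * S - 1.
  apply: dvdX_cancel; rewrite -(@dvdpZr _ (alpha * d)) ?mulf_neq0 //.
  have -> : (alpha * d) *: ('X * (Y * S - 1)) = (alpha * d)%:P * 'X * (Y * S - 1)
    by rewrite -mul_polyC; ring.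
  exact: H1.
set rho := 'X * Y - Z * w.
have Hr : 'X^M %| rho.
  have hrD : rho * D = alpha%:P * k * 'X^(M.+2).
    have -> : rho * D = 'X * Y * D - Z * (w * D) by rewrite /rho; ring.
    rewrite hw1 /x /xp -/W.
    apply/eqP; rewrite -subr_eq0.
    have -> : 'X * Y * D - Z * ((alpha%:P * W - beta%:P) * 'X) - alpha%:P * k * 'X^(M.+2)
        = - (alpha%:P * 'X * (Z * W - (1 - k * 'X^(M.+1)))).
      by rewrite /Y /Z /D /d polyCB !exprS; ring.
    by rewrite /Z /W /D ZW -/k subrr mulr0 oppr0.
  apply: (@dvd_unit _ _ D); first by rewrite hornerC.
  rewrite mulrC hrD; apply: dvdp_mull.
  apply: dvdp_exp2l; exact: leq_trans (leqnSn _) (leqnSn _).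
have HS : Cp \Po w = S.
  rewrite /Cp poly_def rmorph_sum /S /Sp -/w; apply: eq_bigr => i _.
  rewrite -[LHS]/(((g i).[alpha] *: 'X^i) \Po w) comp_polyZ rmorphXn /= comp_polyX.
  by rewrite mul_polyC.
set P := alpha%:P * 'X * Cp ^+ 2 - (1 + (alpha - beta)%:P * 'X) * Cp + 1.
have HP : Z * Y ^+ 2 * (P \Po w)
   = (Y * S - 1) * (- (alpha%:P * ('X * Y - rho) * (- (Y * S - 1) - 2%:R)
         + Z * Y + D * ('X * Y - rho) * Y))
     + rho * (D * Y - alpha%:P).
  rewrite /P expr2 comp_polyD comp_polyB !comp_polyM comp_polyD comp_polyM HS.
  rewrite !comp_polyC comp_polyX /rho /Z /Y /D /d.
  ring.
have H2 : 'X^M %| Z * Y ^+ 2 * (P \Po w).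
  by rewrite HP; apply: dvdp_add; apply: dvdp_mulr.
have H3 : 'X^M %| P \Po w.
  apply: dvd_unit H2.
  by rewrite /Z /Y !hornerE /= subr0 expr1n oner_eq0.
rewrite /Z /D /d.
apply: (comp_inj (w' := (x - beta%:P) * (d^-1)%:P)) H3.
  by rewrite /w /wp -/x; ring.
rewrite hornerM hornerC hornerD hornerN hornerC /x /xp hornerM hornerC W0 //.
by rewrite mulr1 -/d mulfV ?oner_eq0.
Qed.

Lemma sq_uniq (C : numFieldType) (a b : nat -> C) (N : nat) :
  a 0%N = 1 -> b 0%N = 1 ->
  (forall k, (k < N)%N -> fps_mul a a k = fps_mul b b k) ->
  forall k, (k < N)%N -> a k = b k.
Proof.
move=> a0 b0 H; elim/ltn_ind => k IH kN.
case: k IH kN => [|k] IH kN; first by rewrite a0 b0.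
have := H _ kN; rewrite /fps_mul => /eqP; rewrite -subr_eq0 -sumrB.
rewrite big_ord_recl big_ord_recr /= subn0 subnn a0 b0.
rewrite big1 ?add0r; last first.
  move=> i _; have hi : (i < k)%N := ltn_ord i.
  rewrite /bump /= add1n (IH i.+1) ?(IH (k.+1 - i.+1)%N) ?subrr //; lia.
rewrite /bump /=.
have -> : 1 * a k.+1 - 1 * b k.+1 + (a k.+1 * 1 - b k.+1 * 1) = 2%:R * (a k.+1 - b k.+1).
  by rewrite !mul1r !mulr1 mulr2n mulrDl mul1r.
rewrite mulf_eq0 pnatr_eq0 /= subr_eq0 => /eqP.
done.
Qed.

Unset Implicit Arguments.
Theorem mainTheorem2 (C : numClosedFieldType) (alpha beta : C)
    (g : nat -> {poly C}) :
  alpha != beta -> alpha != 0 ->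
  g 0%N = 1 ->
  (forall n : nat, (0 < n)%N ->
     ('X - alpha%:P) * ((alpha - beta) ^+ n.-1)%:P * g n
     = alpha%:P * ('X - beta%:P) ^+ n * ((g n.-1).[alpha])%:P
       - 'X * ((alpha - beta) ^+ n)%:P * g n.-1) ->
  forall s : fps C,
    s 0%N = 1 ->
    fps_mul s s = fps_of_poly (1 - (2 * (alpha + beta)) *: 'X
                                 + ((alpha - beta) ^+ 2) *: 'X ^+ 2) ->
    forall n : nat,
      fps_mul (fps_of_poly ((2 * alpha) *: 'X)) (fun k => (g k).[alpha]) n
      = fps_of_poly (1 + (alpha - beta) *: 'X) n - s n.
Proof.
move=> hab ha g0 rec s s0 hs n.
have hd : alpha - beta != 0 by rewrite subr_eq0.
have H := part2 n.+2 hd ha g0 rec.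
rewrite /= in H.
set Cp := \poly_(i < n.+2) (g i).[alpha] in H.
set P := alpha%:P * 'X * Cp ^+ 2 - (1 + (alpha - beta)%:P * 'X) * Cp + 1 in H.
set Q := 1 - (2 * (alpha + beta)) *: 'X + ((alpha - beta) ^+ 2) *: 'X ^+ 2.
set F := 1 + (alpha - beta) *: 'X - (2 * alpha) *: 'X * Cp.
have HF : F * F - Q = 'X * ((4 * alpha) *: P).
  rewrite /F /Q /P -!mul_polyC; rewrite ?(polyCM, polyCD, polyCB, polyCN, rmorphXn, rmorph_nat) /=.
  ring.
have HFQ : 'X^(n.+2) %| F * F - Q.
  by rewrite HF exprS dvdp_mul2l ?polyX_eq0 // dvdpZr // mulf_neq0 // pnatr_eq0.
have HFk : forall k, (k < n.+2)%N -> (F * F)`_k = Q`_k.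
  move=> k hk; apply/eqP; rewrite -subr_eq0 -coefB -(divpK HFQ) coefMXn hk //.
have Hsk : forall k, (k < n.+2)%N -> s k = F`_k.
  apply: sq_uniq => //.
    by rewrite /F -scalerAl !coefE /= !mulr0 addr0 subr0.
  by move=> k hk; rewrite hs /fps_of_poly -HFk // coefM.
rewrite Hsk // /F coefB /fps_of_poly opprB addrC subrK coefM.
apply: eq_bigr => i _; congr (_ * _).
rewrite /Cp coef_poly ltnS (leq_trans (leq_subr _ _)) //.
Qed.
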